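(* Let $\delta>0$ and let $A$ be a deterministic priority mechanism that processes bidders and is truthful without money and with verification for CAs with known $2$-minded bidders. Then the approximation ratio of $A$ on instances with $m$ goods is greater than $(1-\delta)m/2$.
   Context: Combinatorial auction with a set $\mathsf U$ of $m$ goods (single copy each) and bidders; bidder $i$ has a public collection $\mathcal S_i$ of $2$ nonempty subsets of $\mathsf U$ (known $2$-minded bidders) and a private valuation $v_i:\mathcal S_i\to\mathbb R_{\ge0}$, extended to all subsets $T$ by $v_i(T)=\max\{v_i(S'):S'\in\mathcal S_i,S'\subseteq T\}$ ($0$ if none). Truthfulness without money and with verification (known bidders) means: for all $i$, $\mathbf b_{-i}$, true $v_i$ and declarations $b_i$ with $b_i(A_i(b_i,\mathbf b_{-i}))\le v_i(A_i(b_i,\mathbf b_{-i}))$, $v_i(A_i(v_i,\mathbf b_{-i}))\ge v_i(A_i(b_i,\mathbf b_{-i}))$. Priority mechanism processing bidders: the input is a finite set $I$ of items $(i,v_i)$ (a bidder together with her declared valuation function), drawn from the class $\mathcal I$ of all such items. The mechanism proceeds in rounds; in each round, without looking at the unprocessed items, it chooses a total order on $\mathcal I$ (possibly depending on items processed and decisions made so far), receives the first unprocessed item $(i,v_i)$ of $I$ in this order, and irrevocably decides a (possibly empty) set $S$ allocated to $i$, collecting welfare $v_i(S)$. The output must be feasible (allocated sets pairwise disjoint). Approximation ratio $\alpha$: welfare $\ge\mathrm{OPT}/\alpha$ on every input, $\mathrm{OPT}$ being the maximum welfare of a feasible allocation. *)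

(* Defs.v *)
From HB Require Import structures.
From mathcomp Require Import all_boot all_order all_algebra.
Set Implicit Arguments. Unset Strict Implicit. Unset Printing Implicit Defensive.
Import Order.TTheory GRing.Theory Num.Theory.
Local Open Scope ring_scope.

Section Auction.
Variables (R : realFieldType) (m : nat).

(* Goods: U = 'I_m.  A bidder is an identity together with her public
   collection {S1, S2} of two subsets of U. *)
Definition bidder := (nat * {set 'I_m} * {set 'I_m})%type.
Definition bS1 (b : bidder) : {set 'I_m} := b.1.2.
Definition bS2 (b : bidder) : {set 'I_m} := b.2.

Definition valid_bidder (b : bidder) : bool :=
  [&& bS1 b != set0, bS2 b != set0 & bS1 b != bS2 b].

(* A valuation v : {S1,S2} -> R_{>=0} is the pair (v S1, v S2).
   An item is (bidder, declared valuation). *)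
Definition item := (bidder * (R * R))%type.

Definition valid_item (x : item) : bool :=
  [&& valid_bidder x.1, 0 <= x.2.1 & 0 <= x.2.2].

Definition value (b : bidder) (v : R * R) (T : {set 'I_m}) : R :=
  Num.max (Num.max (if bS1 b \subset T then v.1 else 0)
                   (if bS2 b \subset T then v.2 else 0)) 0.

Definition valid_instance (I : seq item) : bool :=
  all valid_item I && uniq (map fst I).

(* History: processed items with the set allocated to each. *)
Definition history := seq (item * {set 'I_m}).

(* A deterministic priority mechanism: in each round the order depends only on
   the history; the decision depends on the history and the received item. *)
Record mechanism := Mechanism {
  mord : history -> item -> item -> bool;   (* strict order: mord h x y = "x before y" *)
  mdec : history -> item -> {set 'I_m} }.

Definition strict_total_on (r : item -> item -> bool) : Prop :=
  [/\ forall x, valid_item x -> ~~ r x x,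
      forall x y z, valid_item x -> valid_item y -> valid_item z ->
        r x y -> r y z -> r x z
    & forall x y, valid_item x -> valid_item y -> x != y -> r x y || r y x].

(* run A I h h' : starting from history h with unprocessed items I,
   the mechanism terminates with history h'. *)
Inductive run (A : mechanism) : seq item -> history -> history -> Prop :=
| run_nil h : run A [::] h h
| run_step I h h' x :
    x \in I ->
    (forall y, y \in I -> y != x -> mord A h x y) ->
    run A (rem x I) (rcons h (x, mdec A h x)) h' ->
    run A I h h'.

Definition alloc (H : history) (b : bidder) : {set 'I_m} :=
  if [seq p <- H | p.1.1 == b] is p :: _ then p.2 else set0.

(* welfare collected (w.r.t. declared valuations) *)
Definition hist_welfare (H : history) : R :=
  \sum_(p <- H) value p.1.1 p.1.2 p.2.

Definition feasible_hist (H : history) : bool :=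
  pairwise (fun p q : item * {set 'I_m} => [disjoint p.2 & q.2]) H.

Definition item0 : item := ((0%N, set0, set0), (0, 0)).

Definition alloc_feasible (I : seq item) (f : {ffun 'I_(size I) -> {set 'I_m}}) : bool :=
  [forall k, forall l, (k != l) ==> [disjoint f k & f l]].

Definition OPT (I : seq item) : R :=
  \big[Num.max/0]_(f : {ffun 'I_(size I) -> {set 'I_m}} | alloc_feasible f)
     \sum_(k < size I) value (nth item0 I k).1 (nth item0 I k).2 (f k).

Definition is_priority_mechanism (A : mechanism) : Prop :=
  (forall h, strict_total_on (mord A h)) /\
  (forall I H, valid_instance I -> run A I [::] H -> feasible_hist H).

Definition truthful_verif (A : mechanism) : Prop :=
  forall (b : bidder) (others : seq item) (v d : R * R) (Hv Hd : history),
    valid_instance ((b, v) :: others) -> valid_instance ((b, d) :: others) ->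
    run A ((b, d) :: others) [::] Hd ->
    run A ((b, v) :: others) [::] Hv ->
    value b d (alloc Hd b) <= value b v (alloc Hd b) ->
    value b v (alloc Hd b) <= value b v (alloc Hv b).

End Auction.

(* Main.v *)
Require Import Defs.
From HB Require Import structures.
From mathcomp Require Import all_boot all_order all_algebra.
From mathcomp Require Import lra.
Import Order.TTheory GRing.Theory Num.Theory.
Local Open Scope ring_scope.

Section Helpers.
Variables (R : realFieldType) (m : nat).

Lemma min_exists (r : item R m -> item R m -> bool) (s : seq (item R m)) :
  strict_total_on r -> all (@valid_item R m) s -> s != [::] ->
  exists2 x, x \in s & forall y, y \in s -> y != x -> r x y.
Proof.
move=> [irr tr tot]; elim: s => [//|a s IH] /= /andP[va vs] _.
case: (altP (s =P [::])) => [-> | sne].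
  exists a; first by rewrite inE eqxx.
  by move=> y; rewrite inE => /eqP ->; rewrite eqxx.
have [x xs xmin] := IH vs sne.
have vx : valid_item x by move/allP: vs; apply.
case rax: (r a x).
  exists a; first by rewrite inE eqxx.
  move=> y; rewrite inE => /orP[/eqP -> |ys]; first by rewrite eqxx.
  move=> ya; case: (altP (y =P x)) => [-> //|yx].
  have vy : valid_item y by move/allP: vs; apply.
  exact: (tr a x y va vx vy rax (xmin y ys yx)).
exists x; first by rewrite inE xs orbT.
move=> y; rewrite inE => /orP[/eqP -> |ys] yx; last exact: xmin.
by move: (tot x a vx va); rewrite eq_sym yx rax orbF; apply.
Qed.

Lemma run_exists (A : mechanism R m) :
  (forall h, strict_total_on (mord A h)) ->
  forall n (I : seq (item R m)) h, size I = n -> all (@valid_item R m) I ->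
  exists H, run A I h H.
Proof.
move=> hst; elim=> [|n IH] I h.
  by move/size0nil => -> _; exists h; constructor.
move=> sI vI.
have ne : I != [::] by apply/eqP => E; rewrite E in sI.
have [x xI xmin] := @min_exists (mord A h) I (hst h) vI ne.
have s1 : size (rem x I) = n by rewrite size_rem // sI.
have v1 : all (@valid_item R m) (rem x I).
  by apply/allP => y /mem_rem yI; move/allP: vI; apply.
have [H HH] := IH (rem x I) (rcons h (x, mdec A h x)) s1 v1.
by exists H; apply: (run_step xI xmin HH).
Qed.

Lemma run_shape (A : mechanism R m) I h H : run A I h H ->
  exists t, H = h ++ t /\ forall p, p \in t -> p.1 \in I.
Proof.
elim=> [h0 | I0 h0 h' x xI _ _ [t [E Ht]]]; first by exists [::]; rewrite cats0.
exists ((x, mdec A h0 x) :: t); split; first by rewrite E cat_rcons.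
move=> p; rewrite inE => /orP[/eqP -> //| pt]; exact: (mem_rem (Ht p pt)).
Qed.

Lemma value_set0 (b : bidder m) (v : R * R) : valid_bidder b -> value b v set0 = 0.
Proof.
case/and3P => h1 h2 _; rewrite /value !subset0 (negbTE h1) (negbTE h2).
by rewrite !maxxx.
Qed.

Lemma run_single (A : mechanism R m) x : run A [:: x] [::] [:: (x, mdec A [::] x)].
Proof.
apply: (run_step (x := x)); first by rewrite inE.
  by move=> y; rewrite inE => ->.
by rewrite /= eqxx; constructor.
Qed.


Definition bid (g : 'I_m) : bidder m := (nat_of_ord g, [set g], [set: 'I_m]).

Lemma valid_bid (g : 'I_m) : (2 <= m)%N -> valid_bidder (bid g).
Proof.
move=> hm; rewrite /valid_bidder /bS1 /bS2 /=.
apply/and3P; split.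
- by apply/set0Pn; exists g; rewrite inE.
- by apply/set0Pn; exists g; rewrite inE.
apply/eqP => E; have := cardsT 'I_m; rewrite -E cards1 card_ord => E1.
by rewrite -E1 in hm.
Qed.

Lemma value_bid_T (g : 'I_m) (c : R) : 0 <= c -> c <= 2 ->
  value (bid g) (c, 2) [set: 'I_m] = 2.
Proof.
move=> c0 c2; rewrite /value /bS1 /bS2 /= !subsetT.
rewrite (max_r c2) max_l //; exact: ler0n.
Qed.

Lemma value_bid_nT (g : 'I_m) (c : R) (S : {set 'I_m}) : 0 <= c -> c <= 1 ->
  S != [set: 'I_m] -> value (bid g) (c, 2) S <= c.
Proof.
move=> c0 c1 hS; rewrite /value /bS1 /bS2 /= subTset (negbTE hS).
rewrite !ge_max; case: ifP => _; rewrite ?lexx ?c0 //.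
Qed.

End Helpers.
Arguments bid {m}.
Arguments value_bid_T {R m}.
Arguments value_bid_nT {R m}.
Arguments run_exists {R m}.
Arguments run_shape {R m A I h H}.
Arguments run_single {R m}.
Arguments value_set0 {R m}.

Theorem theorem15 (R : realFieldType) (m : nat) (hm : (2 <= m)%N)
    (delta : R) (hdelta : 0 < delta) (A : mechanism R m)
    (hA : is_priority_mechanism A) (htruth : truthful_verif A) :
  exists (I : seq (item R m)) (H : history R m),
    [/\ valid_instance I, run A I [::] H &
        (1 - delta) * m%:R / 2 * hist_welfare H < OPT I].
Proof.
have m0 : (0 < m)%N by apply: leq_trans hm.
pose x0d : 'I_m := Ordinal m0.
pose I : seq (item R m) := [seq (bid g, (1, 2)) | g <- enum 'I_m].
have vI : valid_instance I.
  apply/andP; split.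
    apply/allP => x /mapP [g _ ->]; rewrite /valid_item /= valid_bid //=.
    by rewrite ler01 ler0n.
  rewrite -map_comp map_inj_uniq ?enum_uniq //.
  by move=> g g' /= [] /val_inj.
have [H HH] := run_exists A hA.1 _ I [::] (erefl (size I)) (proj1 (andP vI)).
have feasH := hA.2 I H vI HH.
have HH0 := HH.
inversion HH0 as [h0 E1 E2 | I0 h0 h' x xI xmin Hr E1 E2 E3].
  by have := f_equal size E1; rewrite size_map size_enum_ord => E; rewrite -E in hm.

have [t [EH Ht]] := run_shape Hr.

rewrite /= in EH.
move: xI => /mapP [g _ Ex]; subst x.
case: (altP (mdec A [::] (bid g, (1, 2)) =P [set: 'I_m])) => hS.
-
  exists I, H; split => //.
  have hW : hist_welfare H = 2.
    rewrite /hist_welfare EH big_cons /= hS value_bid_T ?ler01 ?ler1n //.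
    rewrite big1_seq ?addr0 // => q /andP [_ qt].
    move: feasH; rewrite /feasible_hist EH pairwise_cons => /andP [/allP hall _].
    have := hall q qt; rewrite /= hS disjoints_subset => hq.
    have q0 : q.2 = set0.
      by apply/eqP; rewrite -subset0 -setCS setC0.
    rewrite q0 value_set0 //.
    have := Ht q qt => /mem_rem qI.
    by move: (proj1 (andP vI)) => /allP /(_ _ qI) /and3P [].
  have hOPT : m%:R <= OPT I.
    pose f : {ffun 'I_(size I) -> {set 'I_m}} :=
      [ffun k : 'I_(size I) => [set nth x0d (enum 'I_m) k]].
    have sI : size I = m by rewrite size_map size_enum_ord.
    have hk : forall k : 'I_(size I), (k < m)%N.
      by move=> k; have := ltn_ord k; rewrite {2}sI.
    have ff : alloc_feasible f.
      apply/forallP => k; apply/forallP => l; apply/implyP => kl.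
      by rewrite !ffunE disjoints1 inE nth_uniq ?enum_uniq ?size_enum_ord ?hk.
    apply: le_trans (le_bigmax_cond _ _ ff).
    have -> : m%:R = \sum_(k < size I) (1 : R) by rewrite sumr_const card_ord sI.
    apply: ler_sum => k _.
    rewrite (nth_map x0d) ?size_enum_ord ?hk // ffunE /value /bS1 /bS2 /=.
    by rewrite !le_max subxx lexx.
  rewrite hW.
  have hm' : 0 < m%:R :> R by rewrite ltr0n.
  nra.
-
  set b := bid g.
  pose xd : item R m := (b, (0, 2)).
  have vxd : valid_instance [:: xd].
    by rewrite /valid_instance /= /valid_item /= valid_bid //= ?lexx ?ler0n ?ler01.
  have vx : valid_instance [:: ((b, (1, 2)) : item R m)].
    by rewrite /valid_instance /= /valid_item /= valid_bid //= ?lexx ?ler0n ?ler01.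
  case: (altP (mdec A [::] xd =P [set: 'I_m])) => hd.
  + exfalso.
    have := htruth b [::] (1, 2) (0, 2) _ _ vx vxd (run_single A xd)
      (run_single A ((b, (1, 2)) : item R m)).
    rewrite /alloc /= eqxx /= hd value_bid_T ?lexx ?ler0n // value_bid_T ?ler01 ?ler1n //.
    rewrite lexx => /(_ isT) h2.
    have h1 := @value_bid_nT R m g 1 (mdec A [::] (bid g, (1, 2))) ler01 (lexx _) hS.
    have := le_trans h2 h1; apply/negP; rewrite -ltNge; lra.
  + exists [:: xd], [:: (xd, mdec A [::] xd)]; split => //; first exact: run_single.
    have -> : hist_welfare [:: (xd, mdec A [:: ] xd)] = 0.
      rewrite /hist_welfare big_seq1; apply/eqP; rewrite eq_le.
      by rewrite value_bid_nT ?lexx ?ler01 //= /value le_max lexx orbT.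
    rewrite mulr0.
    pose f : {ffun 'I_(size [:: xd]) -> {set 'I_m}} := [ffun => [set: 'I_m]].
    have ff : alloc_feasible f.
      apply/forallP => k; apply/forallP => l; apply/implyP.
      by move: k l => /= k l; rewrite (ord1 k) (ord1 l) eqxx.
    apply: lt_le_trans (le_bigmax_cond _ _ ff).
    rewrite big_ord1 ffunE /= value_bid_T ?lexx ?ler0n // ltr0n.
Qed.
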